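(* Let $m>2$ and $k\ge3$ be integers, and let $r(m)\in(0,1)$ be the unique zero of $B_m$ in $(0,1)$. Let $c>0$ be small enough that $\ker L_{r(m)}\subset X^k_c$ is one-dimensional, and let $h_0$ span this kernel. Define $$\partial_rL_rh_0\big|_{r=r(m)}=\sum_{j\ge1}\frac{d}{dr}\Big(K_j(r)a_{j-2}+y_j(r)a_j+K_j(r)a_{j+2}\Big)\Big|_{r=r(m)}\sin(jx),$$ where $h_0=\sum_j a_j\cos(jx)$ is held fixed. Then $$\partial_rL_rh_0\big|_{r=r(m)}\notin\operatorname{Range}(L_{r(m)}).$$ In fact its $\sin(mx)$-coefficient is nonzero.
   Context: **Coefficients.** For integers $j\ge1$ and $r\in(0,1)$, let $$B_j(r)=-1-2r+2jr-r^2-\frac{(1-r)^j}{(1+r)^{j-2}},\qquad K_j(r)=-\frac{1-r}{8(1+r)^2}B_j(r),$$ $$y_1(r)=-\frac{3r+1}{4(1+r)^2},\qquad y_j(r)=\frac{B_j(r)}{4(1+r)}\ \ (j\ge2).$$ **The operator.** For $h=\sum_{j\ge1}a_j\cos(jx)$ define $$L_rh=\sum_{j\ge1}\big(K_j(r)a_{j-2}+y_j(r)a_j+K_j(r)a_{j+2}\big)\sin(jx),$$ with $a_j=0$ for $j\le0$. **Function spaces.** $X^k_c$ is the space of real $2\pi$-periodic $f=\sum_{j\ge1}a_j\cos(jx)$ extending analytically to $|\operatorname{Im}z|\le c$ with $$\sum_\pm\int|f(x\pm ic)|^2+\sum_\pm\int|\partial^kf(x\pm ic)|^2<\infty.$$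 $Y^{k}_c$ is defined in the same way with sines. *)

(* Defs.v *)
From Stdlib Require Import Reals Lra Lia ZArith.
Open Scope R_scope.

(* Coefficients B_j, K_j, y_j.  (1+r)^(j-2) uses an integer exponent,
   so that j = 1 gives (1+r)^(-1). *)
Definition B (j : nat) (r : R) : R :=
  -1 - 2*r + 2 * INR j * r - r^2
  - (1 - r)^j / powerRZ (1 + r) (Z.of_nat j - 2).

Definition K (j : nat) (r : R) : R :=
  - (1 - r) / (8 * (1 + r)^2) * B j r.

Definition y (j : nat) (r : R) : R :=
  match j with
  | 1%nat => - (3*r + 1) / (4 * (1 + r)^2)
  | _ => B j r / (4 * (1 + r))
  end.

(* A cosine series h = sum_{j>=1} a_j cos(jx) is represented by its
   coefficient sequence a : nat -> R; only indices j >= 1 are meaningful,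
   and coef a n returns a_n with the convention a_n = 0 for n <= 0. *)
Definition coef (a : nat -> R) (n : nat) : R :=
  match n with
  | O => 0
  | _ => a n
  end.

(* The j-th sine coefficient of L_r h (j >= 1).  For j = 1,2 the truncated
   nat subtraction j-2 gives 0, and coef a 0 = 0, matching a_j = 0 for j <= 0. *)
Definition Lcoef (r : R) (a : nat -> R) (j : nat) : R :=
  K j r * coef a (j - 2) + y j r * a j + K j r * coef a (j + 2).

(* Membership of sum_{j>=1} a_j cos(jx) in X^k_c, expressed through the
   Fourier coefficients: by Parseval, over one period
     int |f(x +- ic)|^2 = pi * sum a_j^2 cosh(2jc),
     int |d^k f(x +- ic)|^2 = pi * sum j^(2k) a_j^2 cosh(2jc),
   so the defining condition is the convergence of the series below. *)
Definition inX (k : nat) (c : R) (a : nat -> R) : Prop :=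
  exists l : R,
    Un_cv (fun N => sum_f_R0
             (fun i => let j := S i in
                       (a j)^2 * (1 + INR j ^ (2 * k)) * cosh (2 * INR j * c)) N) l.

(* Main.v *)
Require Import Defs.
From Stdlib Require Import Reals Lra Lia Classical.
From Coquelicot Require Import Coquelicot.
Open Scope R_scope.

Lemma cosh_ge1 x : 1 <= cosh x.
Proof.
  unfold cosh. rewrite exp_Ropp. pose proof (exp_pos x).
  set (u := exp x) in *.
  assert (u + / u >= 2).
  { assert (u * / u = 1) by (field; lra).
    assert (0 < / u) by (apply Rinv_0_lt_compat; lra).
    assert (0 <= (u - 1) * (u - 1) * / u) by (apply Rmult_le_pos; [pose proof (Rle_0_sqr (u-1)); unfold Rsqr in *; lra|lra]).
    replace ((u-1)*(u-1)*/u) with (u + /u - 2) in H2 by (field; lra). lra. }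
  lra.
Qed.

Lemma decay k c a : inX k c a ->
  forall eps, 0 < eps -> exists N, forall j, (N <= j)%nat -> (a j)^2 < eps.
Proof.
  intros [l Hl] eps Heps.
  destruct (Hl (eps/2)) as [N HN]; [lra|].
  exists (S (S N)). intros j Hj.
  destruct j as [|i]; [lia|].
  assert (Hi1 : (i >= N)%nat) by lia.
  destruct i as [|i0]; [lia|].
  assert (Hi0 : (i0 >= N)%nat) by lia.
  pose proof (HN _ Hi1) as H1. pose proof (HN _ Hi0) as H0.
  unfold R_dist in *. rewrite tech5 in H1. cbv beta zeta in H1.
  set (t := sum_f_R0 _ i0) in *.
  set (T := a (S (S i0)) ^ 2 * (1 + INR (S (S i0)) ^ (2 * k)) * cosh (2 * INR (S (S i0)) * c)) in H1.
  assert (a (S (S i0)) ^ 2 <= T).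
  { unfold T. pose proof (cosh_ge1 (2 * INR (S (S i0)) * c)) as Hc.
    set (C := cosh _) in *. set (X := INR (S (S i0)) ^ (2*k)).
    assert (0 <= X) by (apply pow_le; apply pos_INR).
    set (A := a (S (S i0))).
    assert (0 <= A ^ 2) by (simpl; pose proof (Rle_0_sqr A); unfold Rsqr in *; nra).
    assert (1 <= (1 + X) * C).
    { replace 1 with (1*1) at 1 by ring. apply Rmult_le_compat; lra. }
    replace (A^2) with (A^2*1) at 1 by ring. rewrite Rmult_assoc. apply Rmult_le_compat_l; lra. }
  apply Rabs_def2 in H1. apply Rabs_def2 in H0. lra.
Qed.

Definition E (j : nat) (r : R) := (1 - r)^j / powerRZ (1 + r) (Z.of_nat j - 2).

Lemma E_pos j r : 0 < r < 1 -> 0 < E j r.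
Proof.
  intros Hr. unfold E. apply Rdiv_lt_0_compat.
  apply pow_lt; lra. apply powerRZ_lt; lra.
Qed.

Lemma E_S j r : 0 < r < 1 -> E (S j) r = E j r * ((1 - r) / (1 + r)).
Proof.
  intros Hr. unfold E.
  replace (Z.of_nat (S j) - 2)%Z with ((Z.of_nat j - 2) + 1)%Z by lia.
  rewrite powerRZ_add by lra. simpl powerRZ.
  assert (0 < powerRZ (1 + r) (Z.of_nat j - 2)) by (apply powerRZ_lt; lra).
  simpl pow. field. lra.
Qed.

Lemma B_S j r : 0 < r < 1 -> B j r < B (S j) r.
Proof.
  intros Hr. unfold B. fold (E j r). fold (E (S j) r).
  rewrite E_S by lra. rewrite S_INR. pose proof (E_pos j r Hr).
  assert (0 < 1 - (1 - r) / (1 + r)).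
  { replace (1 - (1 - r) / (1 + r)) with (2 * r / (1 + r)) by (field; lra).
    apply Rdiv_lt_0_compat; lra. }
  assert (0 < E j r * (1 - (1 - r) / (1 + r))) by (apply Rmult_lt_0_compat; lra).
  nra.
Qed.

Lemma B_mono j n r : 0 < r < 1 -> B j r < B (j + S n) r.
Proof.
  intros Hr. induction n.
  - rewrite Nat.add_1_r. apply B_S; auto.
  - eapply Rlt_trans; [apply IHn|]. replace (j + S (S n))%nat with (S (j + S n)) by lia.
    apply B_S; auto.
Qed.

Lemma B_ne j m r : 0 < r < 1 -> B m r = 0 -> j <> m -> B j r <> 0.
Proof.
  intros Hr Hm Hjm. destruct (Nat.lt_ge_cases j m) as [H|H].
  - replace m with (j + S (m - j - 1))%nat in Hm by lia. pose proof (B_mono j (m-j-1) r Hr). lra.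
  - replace j with (m + S (j - m - 1))%nat by lia. pose proof (B_mono m (j-m-1) r Hr). lra.
Qed.

Lemma K_y j r : (2 <= j)%nat -> 0 < r < 1 ->
  K j r = - ((1 - r) / (2 * (1 + r))) * y j r.
Proof.
  intros Hj Hr. destruct j as [|[|j]]; try lia. unfold K, y. field. lra.
Qed.

Lemma dom2 j r : (2 <= j)%nat -> 0 < r < 1 -> B j r <> 0 -> 2 * Rabs (K j r) < Rabs (y j r).
Proof.
  intros Hj Hr HB. rewrite K_y by auto. rewrite Rabs_mult, Rabs_Ropp.
  assert (y j r <> 0).
  { destruct j as [|[|j]]; try lia. unfold y. intro H. apply HB.
    apply (f_equal (fun t => t * (4 * (1 + r)))) in H. field_simplify in H; lra. }
  pose proof (Rabs_pos_lt _ H).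
  rewrite (Rabs_right ((1 - r) / (2 * (1 + r)))).
  2: { apply Rle_ge, Rlt_le, Rdiv_lt_0_compat; lra. }
  assert ((1 - r) / (2 * (1 + r)) < 1/2).
  { apply Rmult_lt_reg_r with (2 * (1 + r)); [lra|]. field_simplify; lra. }
  nra.
Qed.

Lemma dom1 r : 0 < r < 1 -> Rabs (K 1 r) < Rabs (y 1 r).
Proof.
  intros Hr. unfold K, y, B. simpl powerRZ. simpl pow. simpl INR.
  replace (- (1 - r) / (8 * ((1 + r) * ((1 + r) * 1))) *
     (-1 - 2 * r + 2 * 1 * r - r * (r * 1) - (1 - r) * 1 / / ((1 + r) * 1)))
    with ((1 - r) / (4 * ((1 + r) * (1 + r)))) by (field; lra).
  replace (- (3 * r + 1) / (4 * ((1 + r) * ((1 + r) * 1))))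
    with (- ((3 * r + 1) / (4 * ((1 + r) * (1 + r))))) by (field; lra).
  rewrite Rabs_Ropp.
  assert (0 < 4 * ((1 + r) * (1 + r))) by nra.
  rewrite !Rabs_right.
  - unfold Rdiv. apply Rmult_lt_compat_r. apply Rinv_0_lt_compat; lra. lra.
  - apply Rle_ge, Rlt_le, Rdiv_lt_0_compat; lra.
  - apply Rle_ge, Rlt_le, Rdiv_lt_0_compat; lra.
Qed.

Lemma step_real K y cm aj cp : K*cm + y*aj + K*cp = 0 -> 0 < Rabs aj ->
  Rabs cm <= Rabs aj -> 2*Rabs K < Rabs y -> Rabs aj < Rabs cp.
Proof.
  intros H0 H1 H2 H3. destruct (Rlt_le_dec (Rabs aj) (Rabs cp)) as [h|h]; auto. exfalso.
  assert (Hy : y*aj = -(K*cm + K*cp)) by lra.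
  assert (Rabs y * Rabs aj <= Rabs K * Rabs cm + Rabs K * Rabs cp).
  { rewrite <- Rabs_mult, Hy, Rabs_Ropp, <- !Rabs_mult. apply Rabs_triang. }
  pose proof (Rabs_pos K). nra.
Qed.

Lemma step_real0 K y aj cp : K*0 + y*aj + K*cp = 0 -> 0 < Rabs aj ->
  Rabs K < Rabs y -> Rabs aj < Rabs cp.
Proof.
  intros H0 H1 H3. destruct (Rlt_le_dec (Rabs aj) (Rabs cp)) as [h|h]; auto. exfalso.
  assert (Hy : y*aj = -(K*cp)) by lra.
  assert (Rabs y * Rabs aj <= Rabs K * Rabs cp).
  { rewrite <- Rabs_mult, Hy, Rabs_Ropp, <- !Rabs_mult. lra. }
  pose proof (Rabs_pos K). nra.
Qed.

Section Ker.
Variables (m : nat) (r0 : R) (a : nat -> R).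
Hypothesis Hm : (2 < m)%nat.
Hypothesis Hr : 0 < r0 < 1.
Hypothesis HB : B m r0 = 0.
Hypothesis Hker : forall j, (1 <= j)%nat -> Lcoef r0 a j = 0.
Hypothesis Hdec : forall eps, 0 < eps -> exists N, forall j, (N <= j)%nat -> (a j)^2 < eps.

Lemma step_gen j : (1 <= j)%nat -> j <> m -> 0 < Rabs (a j) ->
  Rabs (coef a (j-2)) <= Rabs (a j) -> Rabs (a j) < Rabs (a (j+2)).
Proof.
  intros Hj Hjm Ha Hc. pose proof (Hker j Hj) as H. unfold Lcoef in H.
  replace (coef a (j+2)) with (a (j+2)) in H by (replace (j+2)%nat with (S (S j)) by lia; reflexivity).
  pose proof (B_ne j m r0 Hr HB Hjm) as Hbj.
  destruct j as [|[|[|j]]]; try lia.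
  - cbn [coef] in H. eapply step_real0; eauto. apply dom1; auto.
  - cbn [coef] in H. eapply step_real0; eauto. pose proof (dom2 2 r0 ltac:(lia) Hr Hbj).
    pose proof (Rabs_pos (K 2 r0)). lra.
  - eapply step_real; eauto. apply dom2; auto. lia.
Qed.

Lemma chain j : (1 <= j)%nat -> 0 < Rabs (a j) -> Rabs (coef a (j-2)) <= Rabs (a j) ->
  forall n, (forall p, (p < n)%nat -> (j + 2*p)%nat <> m) ->
  Rabs (a j) <= Rabs (a (j + 2*n)%nat) /\ Rabs (coef a (j + 2*n - 2)) <= Rabs (a (j+2*n)%nat).
Proof.
  intros Hj Ha Hc n. induction n as [|n IH]; intros Hp.
  - rewrite Nat.add_0_r. split; lra.
  - destruct IH as [I1 I2]. { intros p Hp'. apply Hp. lia. }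
    assert (Hpos : 0 < Rabs (a (j + 2*n)%nat)) by lra.
    assert (Hne : (j + 2*n)%nat <> m) by (apply Hp; lia).
    assert (Hs := step_gen (j + 2*n) ltac:(lia) Hne Hpos I2).
    replace (j + 2 * S n)%nat with (j + 2*n + 2)%nat by lia.
    replace (j + 2*n + 2 - 2)%nat with (S (j + 2*n - 1)) by lia.
    cbn [coef]. replace (S (j + 2 * n - 1)) with (j + 2*n)%nat by lia. split; lra.
Qed.

Lemma forever j : (1 <= j)%nat -> 0 < Rabs (a j) -> Rabs (coef a (j-2)) <= Rabs (a j) ->
  (forall p, (j + 2*p)%nat <> m) -> False.
Proof.
  intros Hj Ha Hc Hp.
  destruct (Hdec (Rabs (a j) ^ 2)) as [N HN]. { apply pow_lt; lra. }
  destruct (chain j Hj Ha Hc N (fun p _ => Hp p)) as [C1 _].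
  specialize (HN (j + 2*N)%nat ltac:(lia)).
  rewrite <- (pow2_abs (a (j + 2*N)%nat)) in HN. nra.
Qed.

Lemma descent j : (1 <= j)%nat -> 0 < Rabs (a j) ->
  exists q j', j = (j' + 2*q)%nat /\ (1 <= j')%nat /\ Rabs (a j) <= Rabs (a j') /\
     Rabs (coef a (j'-2)) <= Rabs (a j').
Proof.
  induction j as [j IH] using (well_founded_induction Wf_nat.lt_wf).
  intros Hj Ha.
  destruct (Rle_lt_dec (Rabs (coef a (j-2))) (Rabs (a j))) as [h|h].
  - exists 0%nat, j. repeat split; try lia; lra.
  - destruct (j - 2)%nat as [|i] eqn:Ei.
    + cbn [coef] in h. rewrite Rabs_R0 in h. pose proof (Rabs_pos (a j)). lra.
    + cbn [coef] in h.
      destruct (IH (S i) ltac:(lia) ltac:(lia) ltac:(lra)) as [q [j' [E1 [E2 [E3 E4]]]]].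
      exists (S q), j'. repeat split; try lia; lra.
Qed.

Lemma am_nz : (exists j, (1 <= j)%nat /\ a j <> 0) -> a m <> 0.
Proof.
  intros [j [Hj Haj]]. apply Rabs_pos_lt in Haj.
  destruct (descent j Hj Haj) as [q [j' [E1 [E2 [E3 E4]]]]].
  destruct (classic (exists p, (j' + 2*p)%nat = m)) as [[p Hp]|Hn].
  - destruct (chain j' E2 ltac:(lra) E4 p) as [C1 _].
    { intros p' Hp'. lia. }
    rewrite Hp in C1. intro Z. rewrite Z, Rabs_R0 in C1. lra.
  - exfalso. apply (forever j' E2 ltac:(lra) E4). intros p Hp. apply Hn. eauto.
Qed.

Lemma below : a m <> 0 -> Rabs (a (m-2)%nat) <= Rabs (a m).
Proof.
  intros Ham. apply Rabs_pos_lt in Ham.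
  destruct (descent m ltac:(lia) Ham) as [q [j' [E1 [E2 [E3 E4]]]]].
  destruct (chain j' E2 ltac:(lra) E4 q) as [_ C2].
  { intros p Hp. lia. }
  rewrite <- E1 in C2. replace (m-2)%nat with (S (m-3)) in * by lia. exact C2.
Qed.

Lemma above : Rabs (a (m+2)%nat) <= Rabs (a m).
Proof.
  destruct (Rle_lt_dec (Rabs (a (m+2)%nat)) (Rabs (a m))) as [h|h]; auto. exfalso.
  pose proof (Rabs_pos (a m)).
  apply (forever (m+2) ltac:(lia) ltac:(lra)).
  - replace (m+2-2)%nat with (S (m-1)) by lia. cbn [coef].
    replace (S (m-1)) with m by lia. lra.
  - intros p. lia.
Qed.
End Ker.

Lemma B_pow j r : (2 <= j)%nat ->
  B j r = -1 - 2*r + 2*INR j*r - r^2 - (1-r)^j/(1+r)^(j-2).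
Proof.
  intros Hj. unfold B. replace (Z.of_nat j - 2)%Z with (Z.of_nat (j-2)) by lia.
  rewrite <- pow_powerRZ. reflexivity.
Qed.

Lemma B_one r : B 1 r = -1 - 2*r + 2*INR 1*r - r^2 - (1-r)^1 / / ((1+r)^1).
Proof. reflexivity. Qed.

Lemma exd_B j r0 : (1 <= j)%nat -> 0 < r0 < 1 -> ex_derive (B j) r0.
Proof.
  intros Hj Hr. destruct j as [|[|j]]; try lia.
  - eapply ex_derive_ext. { intro t. symmetry. apply B_one. }
    auto_derive. simpl. split; [|split]; auto; try lra.
    apply Rinv_neq_0_compat. lra.
  - eapply ex_derive_ext. { intro t. symmetry. apply B_pow. lia. }
    auto_derive. apply pow_nonzero. lra.
Qed.

Lemma exd_K j r0 : (1 <= j)%nat -> 0 < r0 < 1 -> ex_derive (K j) r0.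
Proof.
  intros Hj Hr. unfold K. auto_derive. split; [nra | split; [apply exd_B; auto | exact I]].
Qed.

Lemma exd_y j r0 : (1 <= j)%nat -> 0 < r0 < 1 -> ex_derive (y j) r0.
Proof.
  intros Hj Hr. destruct j as [|[|j]]; try lia.
  - unfold y. auto_derive. nra.
  - unfold y. auto_derive. split; [apply exd_B; auto; lia | split; [lra | exact I]].
Qed.

Lemma exd_L j r0 a : (1 <= j)%nat -> 0 < r0 < 1 -> ex_derive (fun r => Lcoef r a j) r0.
Proof.
  intros Hj Hr. unfold Lcoef. auto_derive.
  split; [apply exd_K; auto | split; [apply exd_y; auto | split; [apply exd_K; auto | exact I]]].
Qed.

Lemma Bm_deriv n r0 : 0 < r0 < 1 -> exists D, 0 < D /\ is_derive (B (S (S (S n)))) r0 D.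
Proof.
  intros Hr.
  evar (D : R).
  assert (HD : is_derive (fun r => -1 - 2*r + 2*INR (S (S (S n)))*r - r^2 - (1-r)^(S (S (S n)))/(1+r)^(S n)) r0 D).
  { auto_derive. change ((1+r0)^(S n) <> 0). apply pow_nonzero; lra. subst D. reflexivity. }
  exists D. split.
  2: { eapply is_derive_ext; [|exact HD]. intro t. symmetry. apply B_pow. lia. }
  subst D.
  change (match n with 0%nat => 1 | S _ => INR n + 1 end) with (INR (S n)).
  assert (HN : 0 < INR (S n)) by (apply lt_0_INR; lia).
  set (N := INR (S n)) in *.
  assert (HU : 0 < (1 + - r0) ^ n) by (apply pow_lt; lra).
  assert (HX : 0 < (1 + r0) ^ n) by (apply pow_lt; lra).
  set (U := (1 + - r0) ^ n) in *. set (X := (1 + r0) ^ n) in *.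
  assert (I1 : 0 < / ((1 + r0) * X)) by (apply Rinv_0_lt_compat; nra).
  assert (I2 : 0 < / ((1 + r0) * X * ((1 + r0) * X))) by (apply Rinv_0_lt_compat; apply Rmult_lt_0_compat; nra).
  set (J1 := / ((1 + r0) * X)) in *. set (J2 := / ((1 + r0) * X * ((1 + r0) * X))) in *.
  assert (P1 : 0 <= (N + 1 + 1) * ((1 + - r0) * ((1 + - r0) * U)) * J1).
  { repeat apply Rmult_le_pos; lra. }
  assert (P2 : 0 <= (1 + - r0) * ((1 + - r0) * ((1 + - r0) * U)) * (N * X) * J2).
  { repeat apply Rmult_le_pos; lra. }
  match goal with |- 0 < ?e => replace e with (2 * N + 2 - 2 * r0 + (N + 1 + 1) * ((1 + - r0) * ((1 + - r0) * U)) * J1 + (1 + - r0) * ((1 + - r0) * ((1 + - r0) * U)) * (N * X) * J2) by ring end.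
  lra.
Qed.

Definition G (m : nat) (a : nat -> R) (r : R) :=
  -(1-r)/(8*(1+r)^2) * (coef a (m-2) + coef a (m+2)) + a m / (4*(1+r)).

Lemma exd_G C1 C2 r0 : 0 < r0 < 1 ->
  ex_derive (fun r => -(1-r)/(8*(1+r)^2) * C1 + C2/(4*(1+r))) r0.
Proof. intros Hr. auto_derive. split; [nra | split; [lra | exact I]]. Qed.

Lemma L_eq m a r : (2 <= m)%nat -> Lcoef r a m = B m r * G m a r.
Proof.
  intros Hm. destruct m as [|[|m]]; try lia. unfold Lcoef, K, G. cbn [y].
  unfold Rdiv. ring.
Qed.

Lemma G_nz m a r : (2 < m)%nat -> 0 < r < 1 -> a m <> 0 ->
  Rabs (a (m-2)%nat) <= Rabs (a m) -> Rabs (a (m+2)%nat) <= Rabs (a m) -> G m a r <> 0.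
Proof.
  intros Hm Hr Ha H1 H2. unfold G.
  replace (coef a (m-2)) with (a (m-2)%nat) by (replace (m-2)%nat with (S (m-3)) by lia; reflexivity).
  replace (coef a (m+2)) with (a (m+2)%nat) by (replace (m+2)%nat with (S (m+1)) by lia; reflexivity).
  set (c := (1-r)/(8*(1+r)^2)). set (e := / (4*(1+r))).
  assert (Hc : 0 < c) by (unfold c; apply Rdiv_lt_0_compat; nra).
  assert (Hce : 2 * c < e).
  { unfold c, e. replace ((1 - r) / (8 * (1 + r) ^ 2)) with ((1-r)/(2*(1+r)) * / (4*(1+r))) by (field; lra).
    assert (0 < / (4*(1+r))) by (apply Rinv_0_lt_compat; lra).
    assert ((1-r)/(2*(1+r)) < 1/2).
    { apply Rmult_lt_reg_r with (2 * (1 + r)); [lra|]. field_simplify; lra. }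
    nra. }
  apply Rabs_pos_lt in Ha.
  intro Z. replace (- (1 - r) / (8 * (1 + r) ^ 2)) with (- c) in Z by (unfold c, Rdiv; ring).
  unfold Rdiv in Z. fold e in Z.
  assert (e * a m = c * (a (m-2)%nat + a (m+2)%nat)) by lra.
  assert (Rabs (e * a m) <= c * (Rabs (a (m-2)%nat) + Rabs (a (m+2)%nat))).
  { rewrite H, Rabs_mult, (Rabs_right c) by lra. apply Rmult_le_compat_l; [lra|]. apply Rabs_triang. }
  rewrite Rabs_mult, (Rabs_right e) in H0 by lra. nra.
Qed.

Theorem mainTheorem10 (m k : nat) (c r0 : R) (a0 : nat -> R) :
  (2 < m)%nat -> (3 <= k)%nat ->
  0 < r0 < 1 -> B m r0 = 0 ->
  (forall r, 0 < r < 1 -> B m r = 0 -> r = r0) ->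
  0 < c ->
  inX k c a0 ->
  (exists j, (1 <= j)%nat /\ a0 j <> 0) ->
  (forall j, (1 <= j)%nat -> Lcoef r0 a0 j = 0) ->
  (forall a, inX k c a -> (forall j, (1 <= j)%nat -> Lcoef r0 a j = 0) ->
     exists t : R, forall j, (1 <= j)%nat -> a j = t * a0 j) ->
  (exists d : nat -> R, forall j, (1 <= j)%nat ->
     derivable_pt_lim (fun r => Lcoef r a0 j) r0 (d j)) /\
  (forall d : nat -> R,
     (forall j, (1 <= j)%nat -> derivable_pt_lim (fun r => Lcoef r a0 j) r0 (d j)) ->
     (~ exists h : nat -> R, inX k c h /\
          forall j, (1 <= j)%nat -> Lcoef r0 h j = d j) /\
     d m <> 0).
Proof.
  intros Hm Hk Hr HB Huniq Hc HX Hex Hker Hdim.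
  split.
  { exists (fun j => Derive (fun r => Lcoef r a0 j) r0). intros j Hj.
    apply is_derive_Reals. apply Derive_correct. apply exd_L; auto. }
  intros d Hd.
  assert (Hdec := decay k c a0 HX).
  assert (Ham : a0 m <> 0) by (eapply am_nz; eauto).
  assert (H1 : Rabs (a0 (m-2)%nat) <= Rabs (a0 m)) by (eapply below; eauto).
  assert (H2 : Rabs (a0 (m+2)%nat) <= Rabs (a0 m)) by (eapply above; eauto).
  assert (HG := G_nz m a0 r0 Hm Hr Ham H1 H2).
  assert (Hdm : d m <> 0).
  { destruct m as [|[|[|n]]]; try lia.
    destruct (Bm_deriv n r0 Hr) as [D [HD HBd]].
    assert (HGd : ex_derive (G (S (S (S n))) a0) r0).
    { unfold G. auto_derive. split; [nra | split; [lra | exact I]]. }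
    apply Derive_correct in HGd.
    pose proof (is_derive_mult _ _ _ _ _ HBd HGd) as HP.
    assert (HP' : is_derive (fun r => Lcoef r a0 (S (S (S n)))) r0
              (D * G (S (S (S n))) a0 r0 + B (S (S (S n))) r0 * Derive (G (S (S (S n))) a0) r0)).
    { eapply is_derive_ext; [| apply HP; intros; apply Rmult_comm].
      intro t. simpl. rewrite L_eq by lia. reflexivity. }
    rewrite HB, Rmult_0_l, Rplus_0_r in HP'.
    apply is_derive_Reals in HP'.
    rewrite (uniqueness_limite _ _ _ _ (Hd (S (S (S n))) ltac:(lia)) HP').
    apply Rmult_integral_contrapositive. split; [lra | exact HG]. }
  split; [|exact Hdm].
  intros [h [_ Hh]].
  apply Hdm. rewrite <- (Hh m ltac:(lia)).
  destruct m as [|[|[|n]]]; try lia.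
  rewrite L_eq by lia. rewrite HB. ring.
Qed.
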